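(* Suppose there exist an affine plane $\mathrm{AG}(2,k)$ and a resolvable balanced incomplete block design $\mathrm{RBIBD}(v,k,1)$. Then there exists an $\mathrm{RBIBD}(kv,k,1)$ $\mathcal{D}^*$ such that $1$-$\mathrm{BIG}(\mathcal{D}^* )$ is silver.
   Context: A $2$-$(v,k,\lambda)$ design ($2<k<v$) is a pair $(V,\mathcal{B})$ with $|V|=v$ and $\mathcal{B}$ a collection of $k$-subsets of $V$ (blocks) such that every $2$-subset of $V$ lies in exactly $\lambda$ blocks. A parallel class is a set of blocks partitioning $V$. An $\mathrm{RBIBD}(v,k,\lambda)$ is a $2$-$(v,k,\lambda)$ design whose blocks can be partitioned into parallel classes. An affine plane $\mathrm{AG}(2,n)$ is a $2$-$(n^2,n,1)$ design. The $1$-block intersection graph $1$-$\mathrm{BIG}(\mathcal{D})$ has the blocks as vertices, two blocks adjacent iff they intersect in exactly one element. An $\alpha$-set of a graph is a maximum independent set. Let $G$ be an $r$-regular graph and $c$ a proper $(r+1)$-coloring of $G$. A vertex $x$ is rainbow with respect to $c$ if every one of the $r+1$ colors appears on $N[x]=N(x)\cup\{x\}$. Given an $\alpha$-set $I$, $c$ is silver with respect to $I$ if every $x\in I$ is rainbow; $G$ is silver if it admits a silver coloring with respect to some $\alpha$-set. *)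

(* Defs.v *)
From mathcomp Require Import all_boot.
Unset Printing Implicit Defensive.

(* A 2-(n,k,1) design on the point set 'I_n, blocks a set of k-subsets.
   (For lambda = 1 blocks are necessarily distinct, so a set of blocks
   is the same as a collection of blocks.) *)
Definition design2 (n k : nat) (B : {set {set 'I_n}}) : Prop :=
  [/\ 2 < k, k < n,
      forall b, b \in B -> #|b| = k &
      forall x y : 'I_n, x != y ->
        #|[set b in B | (x \in b) && (y \in b)]| = 1].

Definition parallel_class (n : nat) (P : {set {set 'I_n}}) : Prop :=
  partition P [set: 'I_n].

Definition rbibd (n k : nat) (B : {set {set 'I_n}}) : Prop :=
  design2 n k B /\
  exists Pc : {set {set {set 'I_n}}},
    partition Pc B /\ forall P, P \in Pc -> parallel_class n P.

Definition affine_plane (m : nat) (A : {set {set 'I_(m ^ 2)}}) : Prop :=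
  design2 (m ^ 2) m A.

(* The 1-block intersection graph: vertex set B, adjacency = meet in exactly one point. *)
Definition one_big_adj (n : nat) : rel {set 'I_n} :=
  fun b1 b2 => #|b1 :&: b2| == 1.

Section Graph.
Variables (T : finType) (Vx : {set T}) (e : rel T).

Definition regular (r : nat) : Prop :=
  forall x, x \in Vx -> #|[set y in Vx | e x y]| = r.

Definition independent (I : {set T}) : Prop :=
  I \subset Vx /\ forall x y, x \in I -> y \in I -> ~~ e x y.

Definition alpha_set (I : {set T}) : Prop :=
  independent I /\ forall J, independent J -> #|J| <= #|I|.

Definition proper_coloring (m : nat) (c : T -> 'I_m) : Prop :=
  forall x y, x \in Vx -> y \in Vx -> e x y -> c x != c y.

Definition rainbow (m : nat) (c : T -> 'I_m) (x : T) : Prop :=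
  forall col : 'I_m, exists y, [/\ y \in Vx, (y == x) || e x y & c y = col].

Definition silver_coloring (r : nat) (I : {set T}) (c : T -> 'I_r.+1) : Prop :=
  proper_coloring r.+1 c /\ forall x, x \in I -> rainbow r.+1 c x.

Definition silver : Prop :=
  exists r, regular r /\
    exists I, alpha_set I /\ exists c : T -> 'I_r.+1, silver_coloring r I c.
End Graph.

(* Main.v *)
Require Import Defs.
From mathcomp Require Import all_boot.
From Stdlib Require Import Lia.
Set Implicit Arguments. Unset Strict Implicit. Unset Printing Implicit Defensive.

Section Part.
Variable T : finType.
Implicit Types (P : {set {set T}}) (D b : {set T}).

Lemma part_uniq P D b1 b2 x : partition P D -> b1 \in P -> b2 \in P ->
  x \in b1 -> x \in b2 -> b1 = b2.
Proof.
case/and3P => _ tI _ H1 H2 x1 x2.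
by rewrite -(def_pblock tI H1 x1) (def_pblock tI H2 x2).
Qed.

Lemma part_cover P D x : partition P D -> x \in D -> exists2 b, b \in P & x \in b.
Proof.
case/and3P => /eqP cP _ _ xD; rewrite -cP in xD.
by exists (pblock P x); [apply: pblock_mem | rewrite mem_pblock].
Qed.

Lemma part_sub P D b : partition P D -> b \in P -> b \subset D.
Proof. by case/and3P => /eqP <- _ _ bP; apply: bigcup_sup bP. Qed.

Lemma part_pblock P D b x : partition P D -> b \in P -> x \in b -> pblock P x = b.
Proof. by case/and3P => _ tI _; apply: def_pblock. Qed.

Lemma mkpart P D :
  (forall b, b \in P -> b != set0) -> (forall b, b \in P -> b \subset D) ->
  (forall x, x \in D -> exists2 b, b \in P & x \in b) ->
  (forall b1 b2 x, b1 \in P -> b2 \in P -> x \in b1 -> x \in b2 -> b1 = b2) ->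
  partition P D.
Proof.
move=> H0 Hs Hc Hu; apply/and3P; split.
- apply/eqP/setP => x; apply/bigcupP/idP.
    by case=> b bP xb; apply: (subsetP (Hs _ bP)).
  by move/Hc => [b bP xb]; exists b.
- apply/trivIsetP => b1 b2 h1 h2 ne; apply/pred0P => x /=.
  apply/negbTE/negP => /andP [x1 x2]; by rewrite (Hu _ _ _ h1 h2 x1 x2) eqxx in ne.
- by apply/negP => h; have := H0 _ h; rewrite eqxx.
Qed.
End Part.

Section Silver.
Variables (n k : nat) (D : {set {set 'I_n}}) (Pc : {set {set {set 'I_n}}}).
Variables (P0 : {set {set 'I_n}}) (f : {set 'I_n} -> 'I_k).
Hypothesis hk : 1 < k.
Hypothesis hsz : forall b, b \in D -> #|b| = k.
Hypothesis hl : forall b1 b2 x y, b1 \in D -> b2 \in D -> x != y ->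
  x \in b1 -> y \in b1 -> x \in b2 -> y \in b2 -> b1 = b2.
Hypothesis hPc : partition Pc D.
Hypothesis hP : forall P, P \in Pc -> partition P [set: 'I_n].
Hypothesis hP0 : P0 \in Pc.
Hypothesis hf : forall b Q x y, b \in P0 -> Q \in Pc -> Q != P0 ->
  x \in b -> y \in b -> f (pblock Q x) = f (pblock Q y) -> x = y.

Local Notation adj := (one_big_adj n).
Local Notation cls b := (pblock Pc b).

Lemma cls_mem b : b \in D -> cls b \in Pc.
Proof. by move=> bD; apply: pblock_mem; case/and3P: hPc => /eqP ->. Qed.

Lemma in_cls b : b \in D -> b \in cls b.
Proof. by move=> bD; rewrite mem_pblock; case/and3P: hPc => /eqP ->. Qed.

Lemma Q_sub Q b : Q \in Pc -> b \in Q -> b \in D.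
Proof. by move=> QP bQ; apply: (subsetP (part_sub hPc QP)). Qed.

Lemma cls_eq Q b : Q \in Pc -> b \in Q -> cls b = Q.
Proof. by move=> QP bQ; apply: part_pblock hPc QP bQ. Qed.

Lemma adj_refl b : b \in D -> ~~ adj b b.
Proof. by move=> bD; rewrite /one_big_adj setIid hsz // neq_ltn hk orbT. Qed.

Lemma meet_adj b1 b2 x : b1 \in D -> b2 \in D -> b1 != b2 -> x \in b1 -> x \in b2 ->
  b1 :&: b2 = [set x].
Proof.
move=> h1 h2 ne x1 x2; apply/setP => y; rewrite !inE.
case: (eqVneq y x) => [->|yx]; first by rewrite x1 x2.
apply/negP => /andP [y1 y2]; by rewrite (hl h1 h2 (yx) y1 x1 y2 x2) eqxx in ne.
Qed.

Lemma nadj_disj b1 b2 : b1 \in D -> b2 \in D -> b1 != b2 -> ~~ adj b1 b2 ->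
  [disjoint b1 & b2].
Proof.
move=> h1 h2 ne na; apply/pred0P => x /=; apply/negbTE/negP => /andP [x1 x2].
by rewrite /one_big_adj (meet_adj h1 h2 ne x1 x2) cards1 eqxx in na.
Qed.

Lemma adj_cls b1 b2 : b1 \in D -> b2 \in D -> adj b1 b2 -> cls b1 != cls b2.
Proof.
move=> h1 h2 a; apply/negP => /eqP e.
have /set0Pn [x] : b1 :&: b2 != set0 by rewrite -card_gt0 (eqP a).
rewrite inE => /andP [x1 x2].
have e12 : b1 = b2.
  apply: part_uniq (hP (cls_mem h1)) _ _ x1 x2; first exact: in_cls.
  by rewrite e; apply: in_cls.
by move: a; rewrite e12; apply/negP/adj_refl.
Qed.

Lemma cover_Q Q x : Q \in Pc -> x \in cover Q.
Proof. by move=> QP; case/and3P: (hP QP) => /eqP -> _ _; rewrite inE. Qed.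

Lemma meet_blk b Q x : b \in D -> Q \in Pc -> Q != cls b -> x \in b ->
  [/\ pblock Q x \in Q, pblock Q x \in D, x \in pblock Q x &
      b :&: pblock Q x = [set x]].
Proof.
move=> bD QP ne xb.
have qQ : pblock Q x \in Q by apply: pblock_mem; apply: cover_Q.
have qD := Q_sub QP qQ.
have xq : x \in pblock Q x by rewrite mem_pblock cover_Q.
split => //; apply: meet_adj => //; apply/eqP => e.
by rewrite -e in qQ; rewrite (cls_eq QP qQ) eqxx in ne.
Qed.

Lemma card_PcD Q : Q \in Pc -> #|Pc :\ Q| = #|Pc :\ P0|.
Proof.
move=> QP; have := cardsD1 Q Pc; have := cardsD1 P0 Pc.
by rewrite QP hP0 => -> /eqP; rewrite eqn_add2l => /eqP.
Qed.

Lemma regular_D : regular _ D adj (k * #|Pc :\ P0|).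
Proof.
move=> b bD; rewrite -(card_PcD (cls_mem bD)) -(hsz bD) -cardsX.
set S := setX _ _.
have -> : [set y in D | adj b y] = [set pblock z.2 z.1 | z in S].
  apply/setP => y; rewrite inE; apply/andP/imsetP.
    case=> yD a.
    have /cards1P [x ex] := a.
    have : x \in b :&: y by rewrite ex set11.
    rewrite inE => /andP [xb xy].
    exists (x, cls y); first rewrite !inE /= xb (cls_mem yD) andbT.
      by rewrite eq_sym; apply: adj_cls.
    by rewrite /= (part_pblock (hP (cls_mem yD)) (in_cls yD) xy).
  case=> [[x Q]]; rewrite !inE /= => /andP [xb /andP [ne QP]] ->.
  have [_ qD _ e] := meet_blk bD QP ne xb.
  by rewrite qD /one_big_adj e cards1.
apply: card_in_imset => [[x Q] [x' Q']]; rewrite !inE /=.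
move=> /andP [xb /andP [ne QP]] /andP [xb' /andP [ne' QP']] e.
have [qQ _ xq _] := meet_blk bD QP ne xb.
have [qQ' _ xq' _] := meet_blk bD QP' ne' xb'.
rewrite -e in qQ' xq'.
have EQ : Q = Q' by rewrite -(cls_eq QP qQ) (cls_eq QP' qQ').
subst Q'.
case: (eqVneq x x') => [->//|xx].
have qD := Q_sub QP qQ.
have := hl bD qD xx xb xb' xq xq'; move=> eb.
by move: ne; rewrite eb (cls_eq QP qQ) eqxx.
Qed.

Lemma P0D : P0 \subset D.
Proof. exact: part_sub hPc hP0. Qed.

Lemma indep_P0 : independent _ D adj P0.
Proof.
split; first exact: P0D.
move=> x y xP yP; have xD := subsetP P0D _ xP; have yD := subsetP P0D _ yP.
case: (eqVneq x y) => [->|ne]; first exact: adj_refl.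
apply/negP => a.
have /set0Pn [z] : x :&: y != set0 by rewrite -card_gt0 (eqP a).
rewrite inE => /andP [zx zy].
by rewrite (part_uniq (hP hP0) xP yP zx zy) eqxx in ne.
Qed.

Lemma alpha_P0 : alpha_set _ D adj P0.
Proof.
split; first exact: indep_P0.
move=> J [JD Ji].
have tJ : trivIset J.
  apply/trivIsetP => b1 b2 h1 h2 ne.
  apply: nadj_disj => //; [exact: subsetP JD _ h1 | exact: subsetP JD _ h2 | exact: Ji].
have e1 : \sum_(b in J) #|b| = #|J| * k.
  rewrite -sum_nat_const; apply: eq_bigr => b bJ; apply: hsz; exact: subsetP JD _ bJ.
have e2 : \sum_(b in P0) #|b| = #|P0| * k.
  rewrite -sum_nat_const; apply: eq_bigr => b bJ; apply: hsz; exact: subsetP P0D _ bJ.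
have := card_partition (hP hP0); rewrite e2 => eP.
move: tJ; rewrite /trivIset e1 => /eqP eJ.
rewrite -(@leq_pmul2r k) ?(ltnW hk) // -eP eJ.
by apply: (leq_trans (subset_leq_card (subsetT _))).
Qed.


Local Notation M := #|Pc :\ P0|.
Local Notation idx Q := (index Q (enum (Pc :\ P0))).

Definition colr (b : {set 'I_n}) : 'I_(k * M).+1 :=
  if (b \in D) && (cls b != P0) then inord (1 + k * idx (cls b) + f b) else ord0.

Lemma idx_lt Q : Q \in Pc -> Q != P0 -> idx Q < M.
Proof. by move=> QP ne; rewrite cardE index_mem mem_enum !inE ne. Qed.

Lemma colr_val b : b \in D -> cls b != P0 ->
  val (colr b) = 1 + k * idx (cls b) + f b.
Proof.
move=> bD ne; rewrite /colr bD ne /= inordK // ltnS -addnA add1n.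
have := idx_lt (cls_mem bD) ne; set i := idx _ => iM.
apply: leq_trans (_ : k * i.+1 <= _); last by rewrite leq_mul2l iM orbT.
by rewrite mulnS [k + _]addnC ltn_add2l ltn_ord.
Qed.

Lemma colr0 b : b \in P0 -> colr b = ord0.
Proof.
move=> bP; rewrite /colr (cls_eq hP0 bP) eqxx; by case: (b \in D).
Qed.

Lemma idx_inj Q1 Q2 : Q1 \in Pc :\ P0 -> Q2 \in Pc :\ P0 -> idx Q1 = idx Q2 -> Q1 = Q2.
Proof.
move=> h1 h2 e.
rewrite -(nth_index set0 (_ : Q1 \in enum (Pc :\ P0))) ?mem_enum //.
by rewrite e nth_index ?mem_enum.
Qed.

Lemma proper_colr : proper_coloring _ D adj (k * M).+1 colr.
Proof.
move=> b1 b2 h1 h2 a; have ne := adj_cls h1 h2 a.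
case: (eqVneq (cls b1) P0) => e1; case: (eqVneq (cls b2) P0) => e2.
- by rewrite e1 e2 eqxx in ne.
- apply/eqP => /(congr1 val); rewrite (colr_val h2 e2) /colr h1 e1 eqxx /=.
  by move/eqP; rewrite -!addnA add1n.
- apply/eqP => /(congr1 val); rewrite (colr_val h1 e1) /colr h2 e2 eqxx /=.
  by move/eqP; rewrite -!addnA add1n.
- apply/eqP => /(congr1 val); rewrite (colr_val h1 e1) (colr_val h2 e2) -!addnA.
  move/eqP; rewrite eqn_add2l => /eqP /(congr1 (divn^~ k)).
  rewrite ![k * _]mulnC !divnMDl ?(ltnW hk) // !divn_small // !addn0 => e.
  have m1 : cls b1 \in Pc :\ P0 by rewrite !inE e1 cls_mem.
  have m2 : cls b2 \in Pc :\ P0 by rewrite !inE e2 cls_mem.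
  by rewrite (idx_inj m1 m2 e) eqxx in ne.
Qed.

Lemma rainbow_colr b : b \in P0 -> rainbow _ D adj (k * M).+1 colr b.
Proof.
move=> bP col; have bD := subsetP P0D _ bP.
have cb : cls b = P0 := cls_eq hP0 bP.
case: (posnP col) => [c0|cpos].
  exists b; split => //; first by rewrite eqxx.
  by apply: val_inj; rewrite colr0 //= c0.
set m := col.-1.
have mr : m < k * M by rewrite -ltnS prednK // ltn_ord.
have k0 : 0 < k by apply: ltnW.
set j := m %/ k; set t := m %% k.
have jM : j < M by rewrite ltn_divLR // mulnC.
have tk : t < k by rewrite ltn_mod.
set Q := nth set0 (enum (Pc :\ P0)) j.
have QPD : Q \in Pc :\ P0 by rewrite -mem_enum mem_nth // -cardE.
have iQ : idx Q = j by rewrite index_uniq ?enum_uniq // -cardE.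
move: (QPD); rewrite !inE => /andP [QneP0 QP].
have Im : [set f (pblock Q x) | x in b] = [set: 'I_k].
  apply/eqP; rewrite eqEcard subsetT cardsT card_ord card_in_imset ?hsz ?leqnn //.
  by move=> x y xb yb; apply: hf bP QP QneP0 xb yb.
have : Ordinal tk \in [set f (pblock Q x) | x in b] by rewrite Im inE.
case/imsetP => x xb ft.
have neQ : Q != cls b by rewrite cb.
have [qQ qD xq e] := meet_blk bD QP neQ xb.
exists (pblock Q x); split => //.
  by rewrite /one_big_adj e cards1 orbT.
apply: val_inj; rewrite colr_val // (cls_eq QP qQ) // iQ -ft /=.
by rewrite /j /t -addnA [k * _]mulnC -divn_eq /m add1n prednK.
Qed.

Lemma gen_silver : silver _ D adj.
Proof.
exists (k * M); split; first exact: regular_D.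
exists P0; split; first exact: alpha_P0.
exists colr; split; first exact: proper_colr.
exact: rainbow_colr.
Qed.

End Silver.

Lemma arith1 k : k * k - 1 = k.+1 * (k - 1).
Proof. case: k => // k. rewrite subn1 /=. rewrite -?plusE -?multE -?minusE. lia. Qed.

Lemma sum_bool_card (T : finType) (P : pred T) (S : {set T}) :
  \sum_(m in S) (P m : nat) = #|[set m in S | P m]|.
Proof.
rewrite -sum1_card big_mkcond /= [RHS]big_mkcond /=.
by apply: eq_bigr => m _; rewrite !inE; case: (m \in S); case: (P m).
Qed.

Lemma sum_bool_card' (T : finType) (P S : pred T) :
  \sum_(m | S m) (P m : nat) = #|[set m | S m && P m]|.
Proof.
rewrite -sum1_card big_mkcond /= [RHS]big_mkcond /=.
by apply: eq_bigr => m _; rewrite !inE; case: (S m); case: (P m).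
Qed.

Section Design.
Variables (N k : nat) (A : {set {set 'I_N}}).
Hypothesis hsz : forall b, b \in A -> #|b| = k.
Hypothesis hpair : forall x y : 'I_N, x != y ->
  #|[set b in A | (x \in b) && (y \in b)]| = 1.

Lemma line_uniq (p q : 'I_N) m1 m2 : p != q -> m1 \in A -> m2 \in A ->
  p \in m1 -> q \in m1 -> p \in m2 -> q \in m2 -> m1 = m2.
Proof.
move=> pq h1 h2 p1 q1 p2 q2; have /eqP/cards1P [m0 e] := hpair pq.
have : m1 \in [set b in A | (p \in b) && (q \in b)] by rewrite inE h1 p1 q1.
have : m2 \in [set b in A | (p \in b) && (q \in b)] by rewrite inE h2 p2 q2.
by rewrite e !inE => /eqP -> /eqP ->.
Qed.

Definition ln (p q : 'I_N) := odflt set0 [pick m in A | (p \in m) && (q \in m)].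

Lemma ln_spec p q : p != q -> [/\ ln p q \in A, p \in ln p q & q \in ln p q].
Proof.
move=> pq; rewrite /ln; case: pickP => [m /andP [mA /andP [pm qm]] //|none].
have /eqP/cards1P [m0 e] := hpair pq.
have : m0 \in [set b in A | (p \in b) && (q \in b)] by rewrite e set11.
by rewrite inE none.
Qed.
End Design.

Section AG.
Variables (k : nat) (A : {set {set 'I_(k ^ 2)}}).
Hypothesis hA : design2 (k ^ 2) k A.
Local Notation pt := 'I_(k ^ 2).

Lemma hk2 : 2 < k. Proof. by case: hA. Qed.
Lemma hszA b : b \in A -> #|b| = k. Proof. by case: hA => _ _ h _; apply: h. Qed.
Lemma hpairA (x y : pt) : x != y -> #|[set b in A | (x \in b) && (y \in b)]| = 1.
Proof. by case: hA => _ _ _ h; apply: h. Qed.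

Local Notation luniq := (line_uniq hpairA).
Local Notation lnA := (ln A).
Local Notation lnS := (ln_spec hpairA).

Lemma rep (p : pt) : #|[set m in A | p \in m]| = k.+1.
Proof.
set Lp := [set m in A | p \in m].
have e1 : \sum_(q | q != p) \sum_(m in Lp) (q \in m : nat) = (k ^ 2).-1.
  have <- : #|predC1 p| = (k ^ 2).-1 by rewrite cardC1 card_ord.
  rewrite -sum1_card.
  apply: eq_big => [q|q qp]; first by rewrite !inE.
  rewrite sum_bool_card.
  transitivity #|[set b in A | (p \in b) && (q \in b)]|; last first.
    by apply: hpairA; rewrite eq_sym.
  by apply: eq_card => m; rewrite !inE andbA.
have e2 : \sum_(m in Lp) \sum_(q | q != p) (q \in m : nat) = #|Lp| * (k - 1).
  rewrite -sum_nat_const; apply: eq_bigr => m; rewrite inE => /andP [mA pm].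
  rewrite sum_bool_card'.
  have cm : #|m :\ p| = k - 1.
    have := cardsD1 p m; rewrite pm add1n (hszA mA) => e.
    by rewrite [in RHS]e subn1.
  rewrite -cm; apply: eq_card => q; rewrite !inE.
  by rewrite andbC.
have e3 : \sum_(q | q != p) \sum_(m in Lp) (q \in m : nat) =
          \sum_(m in Lp) \sum_(q | q != p) (q \in m : nat).
  by rewrite exchange_big.
rewrite e1 e2 in e3.
have hk := hk2.
apply/eqP; rewrite -(@eqn_pmul2r (k - 1)); last by rewrite subn_gt0 ltnW // ltnW.
apply/eqP; rewrite -e3 -subn1 -mulnn.
exact: arith1.
Qed.

Lemma playfair (l : {set pt}) (p : pt) : l \in A -> p \notin l ->
  #|[set m in A | (p \in m) && [disjoint m & l]]| = 1.
Proof.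
move=> lA pl; set Lp := [set m in A | p \in m].
set X := [set m : {set pt} | [disjoint m & l]].
have eM : Lp :\: X = [set lnA p q | q in l].
  apply/setP => m; rewrite !inE; apply/andP/imsetP.
    case=> nd /andP [mA pm]; case/pred0Pn: nd => q /andP [qm ql].
    exists q => //; have pq : p != q by apply: contraNneq pl => ->.
    have [h1 h2 h3] := lnS pq; exact: luniq pq mA h1 pm qm h2 h3.
  case=> q ql ->; have pq : p != q by apply: contraNneq pl => ->.
  have [h1 h2 h3] := lnS pq; split; last by rewrite h1 h2.
  by apply/pred0Pn; exists q; rewrite /= h3.
have cM : #|Lp :\: X| = k.
  rewrite eM card_in_imset ?hszA // => q q' ql ql' e.
  apply/eqP; apply/negP => /negP qq.
  have pq : p != q by apply: contraNneq pl => ->.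
  have pq' : p != q' by apply: contraNneq pl => ->.
  have [h1 h2 h3] := lnS pq; have [h1' h2' h3'] := lnS pq'.
  rewrite -e in h3'.
  have := luniq qq lA h1 ql ql' h3 h3'; move=> el.
  by rewrite el h2 in pl.
have eD : #|Lp :&: X| = 1.
  have := cardsID X Lp; rewrite cM rep => /eqP.
  by rewrite -[k.+1]add1n eqn_add2r => /eqP.
transitivity #|Lp :&: X|; last exact: eD.
by apply: eq_card => m; rewrite !inE andbA.
Qed.

Definition cls (l : {set pt}) := [set m in A | (m == l) || [disjoint m & l]].

Lemma cls_sub l m : m \in cls l -> m \in A.
Proof. by rewrite inE => /andP []. Qed.

Lemma cls_self l : l \in A -> l \in cls l.
Proof. by move=> lA; rewrite inE lA eqxx. Qed.

Lemma cls_ex l p : l \in A -> exists2 m, m \in cls l & p \in m.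
Proof.
move=> lA; case: (boolP (p \in l)) => pl; first by exists l; rewrite ?cls_self.
have /eqP/cards1P [m e] := playfair lA pl.
have : m \in [set m in A | (p \in m) && [disjoint m & l]] by rewrite e set11.
by rewrite !inE => /andP [mA /andP [pm dm]]; exists m; rewrite // inE mA dm orbT.
Qed.

Lemma cls_uniq l m1 m2 p : l \in A -> m1 \in cls l -> m2 \in cls l ->
  p \in m1 -> p \in m2 -> m1 = m2.
Proof.
move=> lA; rewrite !inE => /andP [h1 o1] /andP [h2 o2] p1 p2.
case: (boolP (p \in l)) => pl.
  have f : forall m : {set pt}, p \in m -> (m == l) || [disjoint m & l] -> m = l.
    move=> m pm /orP [/eqP //|d]; move/pred0P: d => /(_ p).
    by rewrite /= pm pl.
  by rewrite (f _ p1 o1) (f _ p2 o2).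
have f : forall m : {set pt}, p \in m -> (m == l) || [disjoint m & l] -> [disjoint m & l].
  by move=> m pm /orP [/eqP e|//]; rewrite -e pm in pl.
have /eqP/cards1P [m e] := playfair lA pl.
have : m1 \in [set m in A | (p \in m) && [disjoint m & l]] by rewrite inE h1 p1 f.
have : m2 \in [set m in A | (p \in m) && [disjoint m & l]] by rewrite inE h2 p2 f.
by rewrite e !inE => /eqP -> /eqP ->.
Qed.

Lemma cls_part l : l \in A -> partition (cls l) [set: pt].
Proof.
move=> lA; apply: mkpart.
- move=> b bc; rewrite -card_gt0 hszA ?(cls_sub bc) //; have := hk2; by case: k.
- by move=> b _; apply: subsetT.
- by move=> x _; apply: cls_ex.
- by move=> b1 b2 x h1 h2; apply: cls_uniq lA h1 h2.
Qed.

Lemma card_cls l : l \in A -> #|cls l| = k.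
Proof.
move=> lA; have e := card_partition (cls_part lA).
rewrite cardsT card_ord (eq_bigr (fun _ => k)) ?sum_nat_const in e; last first.
  by move=> m mc; apply: hszA; apply: cls_sub mc.
have e' : #|cls l| * k = k * k by rewrite -e mulnn.
have k0 : 0 < k by have := hk2; case: (k).
by apply/eqP; rewrite -(eqn_pmul2r k0) e'.
Qed.

Lemma cls_pair z x y : z \in A -> x \in cls z -> y \in cls z -> y \in cls x.
Proof.
move=> zA hx hy; rewrite inE (cls_sub hy) /=.
case: (eqVneq y x) => //= ne; apply/pred0P => p /=; apply/negbTE/negP.
by move=> /andP [py px]; rewrite (cls_uniq zA hy hx py px) eqxx in ne.
Qed.

Lemma cls_trans l m : l \in A -> m \in cls l -> cls m = cls l.
Proof.
move=> lA ml; have mA := cls_sub ml.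
have lm : l \in cls m by apply: cls_pair lA ml (cls_self lA).
apply/setP => x; apply/idP/idP => hx.
  exact: cls_pair mA lm hx.
exact: cls_pair lA ml hx.
Qed.

Lemma nonpar_meet l m : l \in A -> m \in A -> m \notin cls l ->
  exists p, l :&: m = [set p].
Proof.
move=> lA mA; rewrite inE mA negb_or /= => /andP [ne nd].
case/pred0Pn: nd => p /= /andP [pm pl]; exists p; apply/setP => q; rewrite !inE.
case: (eqVneq q p) => [->|qp]; first by rewrite pm pl.
apply/negP => /andP [ql qm].
by rewrite (luniq qp mA lA qm pm ql pl) eqxx in ne.
Qed.
End AG.

Section Grid.
Variables (k : nat) (A : {set {set 'I_(k ^ 2)}}) (l0 : {set 'I_(k ^ 2)}) (p0 : 'I_(k ^ 2)).
Hypothesis hA : design2 (k ^ 2) k A.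
Hypothesis l0A : l0 \in A.
Local Notation G := (cls A l0).

Definition gl (a : 'I_k) := nth set0 (enum G) a.
Definition beta (a i : 'I_k) := nth p0 (enum (gl a)) i.

Lemma szG : size (enum G) = k.
Proof. by rewrite -cardE card_cls. Qed.

Lemma gl_mem a : gl a \in G.
Proof. by rewrite -mem_enum mem_nth // szG. Qed.

Lemma gl_A a : gl a \in A.
Proof. exact (cls_sub (gl_mem a)). Qed.

Lemma gl_inj : injective gl.
Proof.
move=> a b /eqP; rewrite /gl nth_uniq ?szG ?enum_uniq // => /eqP; exact: val_inj.
Qed.

Lemma szgl a : size (enum (gl a)) = k.
Proof. by rewrite -cardE (hszA hA (gl_A a)). Qed.

Lemma beta_mem a i : beta a i \in gl a.
Proof. by rewrite -mem_enum mem_nth // szgl. Qed.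

Lemma gl_cls a : cls A (gl a) = G.
Proof. exact (cls_trans hA l0A (gl_mem a)). Qed.

Lemma G_part : partition G [set: 'I_(k ^ 2)].
Proof. exact (cls_part hA l0A). Qed.

Lemma beta_inj a i a' i' : beta a i = beta a' i' -> a = a' /\ i = i'.
Proof.
move=> e; have ba' := beta_mem a' i'; rewrite -e in ba'.
have ea := gl_inj (part_uniq G_part (gl_mem a) (gl_mem a') (beta_mem a i) ba').
subst a'; split => //; move: e => /eqP; rewrite /beta nth_uniq ?szgl ?enum_uniq //.
by move/eqP; apply: val_inj.
Qed.

Lemma beta_surj a p : p \in gl a -> exists i, beta a i = p.
Proof.
move=> pa; have lt : index p (enum (gl a)) < size (enum (gl a)) by rewrite index_mem mem_enum.
rewrite szgl in lt.
by exists (Ordinal lt); rewrite /beta /= nth_index // mem_enum.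
Qed.

Lemma beta_all p : exists a i, beta a i = p.
Proof.
have [g gG pg] := part_cover G_part (in_setT p).
have lt : index g (enum G) < size (enum G) by rewrite index_mem mem_enum.
rewrite szG in lt.
have eg : gl (Ordinal lt) = g by rewrite /gl /= nth_index // mem_enum.
have pg' : p \in gl (Ordinal lt) by rewrite eg.
by have [i e] := beta_surj pg'; exists (Ordinal lt), i.
Qed.

Lemma inG_beta l a i : l \in G -> beta a i \in l -> l = gl a.
Proof. by move=> lG bl; apply: part_uniq G_part lG (gl_mem a) bl (beta_mem a i). Qed.

Lemma notG_ex l a : l \in A -> l \notin G -> exists i, beta a i \in l.
Proof.
move=> lA lG; have [p e] : exists p, gl a :&: l = [set p].
  by apply (nonpar_meet hA (gl_A a) lA); rewrite gl_cls.
have : p \in gl a :&: l by rewrite e set11.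
rewrite inE => /andP [pa pl]; have [i bi] := beta_surj pa.
by exists i; rewrite bi.
Qed.

Lemma notG_uniq l a i i' : l \in A -> l \notin G -> beta a i \in l -> beta a i' \in l ->
  i = i'.
Proof.
move=> lA lG h h'; case: (eqVneq i i') => // ne.
have nb : beta a i != beta a i'.
  by apply/eqP => /beta_inj [_ e]; rewrite e eqxx in ne.
have := line_uniq (hpairA hA) nb lA (gl_A a) h h' (beta_mem a i) (beta_mem a i').
by move=> e; rewrite e gl_mem in lG.
Qed.
End Grid.

Lemma d2_pair N k (A : {set {set 'I_N}}) : design2 N k A ->
  forall x y : 'I_N, x != y -> #|[set b in A | (x \in b) && (y \in b)]| = 1.
Proof. by case. Qed.

Lemma d2_sz N k (A : {set {set 'I_N}}) : design2 N k A -> forall b, b \in A -> #|b| = k.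
Proof. by case. Qed.

Section Prod.
Variables (k v : nat) (A : {set {set 'I_(k ^ 2)}}) (l0 : {set 'I_(k ^ 2)}).
Variables (p0 : 'I_(k ^ 2)) (B0 : {set {set 'I_v}}) (PcD : {set {set {set 'I_v}}}).
Variables (y0 : 'I_v) (i0 : 'I_k).
Hypothesis hA : design2 (k ^ 2) k A.
Hypothesis l0A : l0 \in A.
Hypothesis hB : design2 v k B0.
Hypothesis hPcD : partition PcD B0.
Hypothesis hPD : forall P, P \in PcD -> partition P [set: 'I_v].

Local Notation n := (k * v).
Local Notation G := (cls A l0).
Local Notation bt := (beta A l0 p0).
Local Notation Ls := (A :\: G).

Lemma hk : 2 < k. Proof. by case: hB. Qed.
Lemma hkv : k < v. Proof. by case: hB. Qed.

Lemma cardTp : #|{: 'I_v * 'I_k}| = k * v.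
Proof. by rewrite card_prod !card_ord mulnC. Qed.

Definition enc (z : 'I_v * 'I_k) : 'I_n := cast_ord cardTp (enum_rank z).
Definition dec (p : 'I_n) : 'I_v * 'I_k := enum_val (cast_ord (esym cardTp) p).

Lemma encK : cancel enc dec.
Proof. by move=> z; rewrite /enc /dec cast_ordK enum_rankK. Qed.
Lemma decK : cancel dec enc.
Proof. by move=> p; rewrite /enc /dec enum_valK cast_ordKV. Qed.

Definition rho (B : {set 'I_v}) (y : 'I_v) : 'I_k := insubd i0 (index y (enum B)).

Lemma szB B : B \in B0 -> size (enum B) = k.
Proof. by move=> BB; rewrite -cardE (d2_sz hB BB). Qed.

Lemma rho_val B y : B \in B0 -> y \in B -> val (rho B y) = index y (enum B).
Proof.
move=> BB yB; have h : index y (enum B) < size (enum B) by rewrite index_mem mem_enum.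
by rewrite (szB BB) in h; rewrite val_insubd h.
Qed.

Lemma rho_inj B y y' : B \in B0 -> y \in B -> y' \in B -> rho B y = rho B y' -> y = y'.
Proof.
move=> BB yB yB' /(congr1 val); rewrite !rho_val // => e.
by rewrite -(nth_index y0 (_ : y \in enum B)) ?mem_enum // e nth_index ?mem_enum.
Qed.

Lemma rho_surj B a : B \in B0 -> exists2 y, y \in B & rho B y = a.
Proof.
move=> BB; have lt : a < size (enum B) by rewrite szB.
have yB : nth y0 (enum B) a \in B by rewrite -mem_enum mem_nth.
exists (nth y0 (enum B) a) => //; apply: val_inj; rewrite rho_val //.
by rewrite index_uniq ?enum_uniq.
Qed.

Definition vert (x : 'I_v) : {set 'I_n} := [set p | (dec p).1 == x].
Definition blk (B : {set 'I_v}) (l : {set 'I_(k ^ 2)}) : {set 'I_n} :=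
  [set p | ((dec p).1 \in B) && (bt (rho B (dec p).1) (dec p).2 \in l)].

Lemma mem_vert z x : (enc z \in vert x) = (z.1 == x).
Proof. by rewrite inE encK. Qed.

Lemma mem_blk z B l : (enc z \in blk B l) = (z.1 \in B) && (bt (rho B z.1) z.2 \in l).
Proof. by rewrite inE encK. Qed.

Lemma Ls_A l : l \in Ls -> l \in A. Proof. by rewrite inE => /andP []. Qed.
Lemma Ls_G l : l \in Ls -> l \notin G. Proof. by rewrite inE => /andP []. Qed.

Lemma blk_two B l x i j : l \in Ls -> bt (rho B x) i \in l -> bt (rho B x) j \in l -> i = j.
Proof.
move=> lL hi hj.
exact (notG_uniq hA l0A (Ls_A lL) (Ls_G lL) hi hj).
Qed.

Lemma encI : injective enc. Proof. exact: can_inj encK. Qed.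
Lemma decI : injective dec. Proof. exact: can_inj decK. Qed.

Lemma card_vert x : #|vert x| = k.
Proof.
have -> : vert x = [set enc (x, i) | i : 'I_k].
  apply/setP => p; rewrite inE; apply/eqP/imsetP.
    by move=> e; exists (dec p).2 => //; rewrite -e -surjective_pairing decK.
  by case=> i _ ->; rewrite encK.
by rewrite card_imset ?card_ord // => i j /encI [].
Qed.

Lemma card_blk B l : B \in B0 -> l \in Ls -> #|blk B l| = k.
Proof.
move=> BB lL; transitivity #|B|; last exact (d2_sz hB BB).
have eB : B = [set (dec p).1 | p in blk B l].
  apply/setP => y; apply/idP/imsetP.
    move=> yB; have [i hi] := notG_ex p0 hA l0A (rho B y) (Ls_A lL) (Ls_G lL).
    by exists (enc (y, i)); rewrite ?encK // mem_blk yB.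
  by case=> p; rewrite inE => /andP [h _] ->.
rewrite [in RHS]eB; apply/esym; apply: card_in_imset => p q; rewrite !inE => /andP [_ hp] /andP [_ hq] e.
rewrite e in hp; have ei := blk_two lL hp hq.
by apply: decI; rewrite [dec p]surjective_pairing [dec q]surjective_pairing e ei.
Qed.

Definition Dst : {set {set 'I_n}} :=
  [set vert x | x : 'I_v] :|: [set blk B l | B in B0, l in Ls].

Lemma vert_D x : vert x \in Dst.
Proof. by rewrite inE; apply/orP; left; apply: imset_f. Qed.

Lemma blk_D B l : B \in B0 -> l \in Ls -> blk B l \in Dst.
Proof. by move=> BB lL; rewrite inE; apply/orP; right; apply/imset2P; exists B l. Qed.

Lemma DstP b : b \in Dst ->
  (exists x, b = vert x) \/ exists B l, [/\ B \in B0, l \in Ls & b = blk B l].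
Proof.
rewrite inE => /orP [/imsetP [x _ ->]|/imset2P [B l BB lL ->]]; first by left; exists x.
by right; exists B, l.
Qed.

Lemma szDst b : b \in Dst -> #|b| = k.
Proof.
by case/DstP => [[x ->]|[B [l [BB lL ->]]]]; [apply: card_vert | apply: card_blk].
Qed.

Lemma hpB : forall x y : 'I_v, x != y -> #|[set b in B0 | (x \in b) && (y \in b)]| = 1.
Proof. exact: d2_pair hB. Qed.
Lemma hpA : forall x y : 'I_(k ^ 2), x != y -> #|[set b in A | (x \in b) && (y \in b)]| = 1.
Proof. exact: d2_pair hA. Qed.

Lemma uniq1 (T : finType) (S : {set T}) b0 : b0 \in S -> (forall b, b \in S -> b = b0) ->
  #|S| = 1.
Proof.
move=> h0 h; apply/eqP/cards1P; exists b0; apply/setP => b; rewrite inE.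
by apply/idP/eqP => [/h //|->].
Qed.

Lemma pair_unique z w : z != w ->
  exists2 b0, b0 \in Dst & [/\ enc z \in b0, enc w \in b0 &
    forall b, b \in Dst -> enc z \in b -> enc w \in b -> b = b0].
Proof.
case: z w => [x i] [y j] ne.
case: (eqVneq x y) => [exy|nxy].
  subst y; have nij : i != j by apply: contraNneq ne => ->.
  exists (vert x); first exact: vert_D.
  split; rewrite ?mem_vert //.
  move=> b; case/DstP => [[x' ->]|[B [l [BB lL ->]]]].
    by rewrite !mem_vert /= => /eqP ->.
  rewrite !mem_blk /= => /andP [_ h1] /andP [_ h2].
  by rewrite (blk_two lL h1 h2) eqxx in nij.
have [Bh1 Bh2 Bh3] := ln_spec hpB nxy; set B := ln B0 x y in Bh1 Bh2 Bh3.
have nr : rho B x != rho B y by apply/eqP => /(rho_inj Bh1 Bh2 Bh3); apply/eqP.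
have nP : bt (rho B x) i != bt (rho B y) j.
  by apply/eqP => /(beta_inj hA l0A) [e _]; rewrite e eqxx in nr.
have [lh1 lh2 lh3] := ln_spec hpA nP; set l := ln A _ _ in lh1 lh2 lh3.
have lL : l \in Ls.
  rewrite inE lh1 andbT; apply/negP => lG.
  have e1 := inG_beta hA l0A lG lh2; have e2 := inG_beta hA l0A lG lh3.
  by rewrite e1 in e2; move: nr; rewrite (gl_inj hA l0A e2) eqxx.
exists (blk B l); first exact: blk_D.
split; rewrite ?mem_blk /= ?Bh2 ?Bh3 //.
move=> b; case/DstP => [[x' ->]|[B' [l' [BB' lL' ->]]]].
  by rewrite !mem_vert /= => /eqP e1 /eqP e2; rewrite e1 e2 eqxx in nxy.
rewrite !mem_blk /= => /andP [x1 h1] /andP [y1 h2].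
have eB : B' = B by apply: (line_uniq hpB nxy BB' Bh1 x1 y1 Bh2 Bh3).
subst B'; have el : l' = l by apply: (line_uniq hpA nP (Ls_A lL') lh1 h1 h2 lh2 lh3).
by rewrite el.
Qed.

Lemma hpD : forall x y : 'I_n, x != y -> #|[set b in Dst | (x \in b) && (y \in b)]| = 1.
Proof.
move=> p q pq; rewrite -(decK p) -(decK q).
have ne : dec p != dec q by apply: contraNneq pq => /(congr1 enc); rewrite !decK => ->.
have [b0 bD [h1 h2 h3]] := pair_unique ne.
apply: (uniq1 (b0 := b0)); first by rewrite inE bD h1 h2.
by move=> b; rewrite inE => /andP [bD' /andP [z1 z2]]; apply: h3.
Qed.

Lemma design_Dst : design2 n k Dst.
Proof.
split; first exact: hk.
- rewrite ltn_Pmulr //; last by have := hk; case: (k).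
  by apply: leq_ltn_trans hkv; apply: ltnW; apply: ltn_trans hk.
- exact: szDst.
- exact: hpD.
Qed.

Lemma k1 : 1 < k. Proof. by apply: ltn_trans hk. Qed.
Lemma k0 : 0 < k. Proof. by apply: ltnW k1. Qed.
Definition o0 : 'I_k := Ordinal k0.
Definition o1 : 'I_k := Ordinal k1.

Lemma vert_blk x B l : B \in B0 -> l \in Ls -> vert x != blk B l.
Proof.
move=> BB lL; apply/eqP => e.
have h0 : enc (x, o0) \in blk B l by rewrite -e mem_vert.
have h1 : enc (x, o1) \in blk B l by rewrite -e mem_vert.
rewrite !mem_blk /= in h0 h1; case/andP: h0 => _ h0; case/andP: h1 => _ h1.
by have := blk_two lL h0 h1.
Qed.

Lemma blk_inj B l B' l' : B \in B0 -> l \in Ls -> B' \in B0 -> l' \in Ls ->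
  blk B l = blk B' l' -> B = B' /\ l = l'.
Proof.
move=> BB lL BB' lL' e.
have sub : forall B1 l1 B2 l2, B1 \in B0 -> l1 \in Ls -> blk B1 l1 = blk B2 l2 ->
    B1 \subset B2.
  move=> B1 l1 B2 l2 h1 h2 e12; apply/subsetP => y yB.
  have [i hi] := notG_ex p0 hA l0A (rho B1 y) (Ls_A h2) (Ls_G h2).
  have : enc (y, i) \in blk B1 l1 by rewrite mem_blk yB.
  by rewrite e12 mem_blk => /andP [].
have eB : B = B'.
  apply/eqP; rewrite eqEcard (sub B l B' l') //=.
  by rewrite (d2_sz hB BB) (d2_sz hB BB').
subst B'; split => //.
have [y1 y1B r1] := rho_surj o0 BB.
have [y2 y2B r2] := rho_surj o1 BB.
have [i1 h1] := notG_ex p0 hA l0A (rho B y1) (Ls_A lL) (Ls_G lL).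
have [i2 h2] := notG_ex p0 hA l0A (rho B y2) (Ls_A lL) (Ls_G lL).
have h1' : enc (y1, i1) \in blk B l' by rewrite -e mem_blk y1B.
have h2' : enc (y2, i2) \in blk B l' by rewrite -e mem_blk y2B.
rewrite !mem_blk /= in h1' h2'; case/andP: h1' => _ h1'; case/andP: h2' => _ h2'.
have nP : bt (rho B y1) i1 != bt (rho B y2) i2.
  by apply/eqP => /(beta_inj hA l0A) [e' _]; move: e'; rewrite r1 r2.
exact: (line_uniq hpA nP (Ls_A lL) (Ls_A lL') h1 h2 h1' h2').
Qed.

Definition P0 : {set {set {set 'I_n}}} := [set [set vert x | x : 'I_v]].
Definition V0 : {set {set 'I_n}} := [set vert x | x : 'I_v].
Definition Cl (P : {set {set 'I_v}}) (K : {set {set 'I_(k ^ 2)}}) : {set {set 'I_n}} :=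
  [set blk B l | B in P, l in K].
Definition Ks := [set cls A l | l in Ls].
Definition Pcs : {set {set {set 'I_n}}} := V0 |: [set Cl P K | P in PcD, K in Ks].

Lemma cls_Ls m l : m \in Ls -> l \in cls A m -> l \in Ls.
Proof.
move=> mL lm; rewrite inE (cls_sub lm) andbT; apply/negP => lG.
have e1 := cls_trans hA l0A lG; have e2 := cls_trans hA (Ls_A mL) lm.
have : m \in cls A m := cls_self (Ls_A mL).
by rewrite -e2 e1 => mG; move: (Ls_G mL); rewrite mG.
Qed.

Lemma PD P : P \in PcD -> P \subset B0.
Proof. by move=> h; apply: part_sub hPcD h. Qed.

Lemma PcsP X : X \in Pcs ->
  X = V0 \/ exists P m, [/\ P \in PcD, m \in Ls & X = Cl P (cls A m)].
Proof.
rewrite !inE => /orP [/eqP ->|/imset2P [P K PP /imsetP [m mL ->] ->]]; first by left.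
by right; exists P, m.
Qed.

Lemma part_Pcs : partition Pcs Dst.
Proof.
apply: mkpart.
- move=> X /PcsP [->|[P [m [PP mL ->]]]].
    by apply/set0Pn; exists (vert y0); apply: imset_f.
  have : P != set0 by apply/negP => /eqP e; case/and3P: hPcD => _ _; rewrite -e PP.
  case/set0Pn => B BP; apply/set0Pn; exists (blk B m); apply/imset2P; exists B m => //.
  exact: cls_self (Ls_A mL).
- move=> X /PcsP [->|[P [m [PP mL ->]]]].
    by apply/subsetP => b /imsetP [x _ ->]; apply: vert_D.
  apply/subsetP => b /imset2P [B l BP lK ->]; apply: blk_D.
    exact: subsetP (PD PP) _ BP.
  exact: cls_Ls lK.
- move=> b /DstP [[x ->]|[B [l [BB lL ->]]]].
    by exists V0; rewrite ?inE ?eqxx //; apply: imset_f.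
  exists (Cl (pblock PcD B) (cls A l)).
    rewrite !inE; apply/orP; right; apply/imset2P; exists (pblock PcD B) (cls A l) => //.
      by apply: pblock_mem; case/and3P: hPcD => /eqP ->.
    by apply: imset_f.
  apply/imset2P; exists B l => //; last exact: cls_self (Ls_A lL).
  by rewrite mem_pblock; case/and3P: hPcD => /eqP ->.
- have cl : forall P m b, P \in PcD -> m \in Ls -> b \in Cl P (cls A m) ->
      exists B l, [/\ B \in P, B \in B0, l \in cls A m, l \in Ls & b = blk B l].
    move=> P m b PP mL /imset2P [B l BP lK ->]; exists B, l; split => //.
      exact: subsetP (PD PP) _ BP.
    exact: cls_Ls lK.
  move=> X1 X2 b /PcsP [->|[P [m [PP mL ->]]]] /PcsP [->|[P' [m' [PP' mL' ->]]]] //.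
  + move=> /imsetP [x _ ->] /(cl _ _ _ PP' mL') [B [l [_ BB _ lL e]]].
    by move: (vert_blk x BB lL); rewrite e eqxx.
  + move=> /(cl _ _ _ PP mL) [B [l [_ BB _ lL e]]] /imsetP [x _ e'].
    by move: (vert_blk x BB lL); rewrite -e' e eqxx.
  + move=> /(cl _ _ _ PP mL) [B [l [BP BB lK lL ->]]].
    move=> /(cl _ _ _ PP' mL') [B' [l' [BP' BB' lK' lL' e]]].
    have [eB el] := blk_inj BB lL BB' lL' e; subst B' l'.
    have eP := part_uniq hPcD PP PP' BP BP'; subst P'.
    by rewrite -(cls_trans hA (Ls_A mL) lK) (cls_trans hA (Ls_A mL') lK').
Qed.

Lemma part_V0 : partition V0 [set: 'I_n].
Proof.
apply: mkpart.
- move=> b /imsetP [x _ ->]; by rewrite -card_gt0 card_vert k0.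
- by move=> b _; apply: subsetT.
- move=> p _; exists (vert (dec p).1); first exact: imset_f.
  by rewrite inE.
- move=> b1 b2 p /imsetP [x _ ->] /imsetP [x' _ ->]; rewrite !inE => /eqP <- /eqP <-.
  by [].
Qed.

Lemma part_Cl P m : P \in PcD -> m \in Ls -> partition (Cl P (cls A m)) [set: 'I_n].
Proof.
move=> PP mL; have mA := Ls_A mL; apply: mkpart.
- move=> b /imset2P [B l BP lK ->]; rewrite -card_gt0 card_blk ?k0 //.
    exact: subsetP (PD PP) _ BP.
  exact: cls_Ls lK.
- by move=> b _; apply: subsetT.
- move=> p _; have [B BP xB] := part_cover (hPD PP) (in_setT (dec p).1).
  have [l lK pl] := cls_ex hA (bt (rho B (dec p).1) (dec p).2) mA.
  exists (blk B l); first by apply/imset2P; exists B l.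
  by rewrite inE xB pl.
- move=> b1 b2 p /imset2P [B l BP lK ->] /imset2P [B' l' BP' lK' ->].
  rewrite !inE => /andP [x1 h1] /andP [x2 h2].
  have eB := part_uniq (hPD PP) BP BP' x1 x2; subst B'.
  by rewrite (cls_uniq hA mA lK lK' h1 h2).
Qed.

Lemma par_Pcs X : X \in Pcs -> parallel_class n X.
Proof.
by case/PcsP => [->|[P [m [PP mL ->]]]]; [apply: part_V0 | apply: part_Cl].
Qed.

Lemma rbibd_Dst : rbibd n k Dst.
Proof.
split; first exact: design_Dst.
by exists Pcs; split; [apply: part_Pcs | apply: par_Pcs].
Qed.

Definition lineof (s : {set 'I_n}) : {set 'I_(k ^ 2)} :=
  odflt set0 [pick l in Ls | [exists B in B0, s == blk B l]].

Lemma lineof_blk B l : B \in B0 -> l \in Ls -> lineof (blk B l) = l.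
Proof.
move=> BB lL; rewrite /lineof; case: pickP => [l' /= /andP [lL' ex]|none] /=.
  case/existsP: ex => B' /andP [BB' /eqP e].
  by have [_ ->] := blk_inj BB lL BB' lL' e.
move: (none l) => /=; rewrite lL /= => /negbT /existsPn /(_ B); by rewrite BB eqxx.
Qed.

Definition cidx (l : {set 'I_(k ^ 2)}) : 'I_k := insubd i0 (index l (enum (cls A l))).
Definition fcol (s : {set 'I_n}) : 'I_k := cidx (lineof s).

Lemma cidx_inj m l l' : m \in Ls -> l \in cls A m -> l' \in cls A m -> cidx l = cidx l' -> l = l'.
Proof.
move=> mL lK lK'; have mA := Ls_A mL.
rewrite /cidx (cls_trans hA mA lK) (cls_trans hA mA lK') => /(congr1 val).
have sz : size (enum (cls A m)) = k by rewrite -cardE card_cls.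
have i1 : index l (enum (cls A m)) < size (enum (cls A m)) by rewrite index_mem mem_enum.
have i2 : index l' (enum (cls A m)) < size (enum (cls A m)) by rewrite index_mem mem_enum.
rewrite sz in i1 i2; rewrite !val_insubd i1 i2 => e.
by rewrite -(nth_index set0 (_ : l \in enum (cls A m))) ?mem_enum // e nth_index ?mem_enum.
Qed.

Lemma hf_Dst b Q x y : b \in V0 -> Q \in Pcs -> Q != V0 -> x \in b -> y \in b ->
  fcol (pblock Q x) = fcol (pblock Q y) -> x = y.
Proof.
move=> /imsetP [x0 _ ->] QP; case/PcsP: (QP) => [-> | [P [m [PP mL eQ]]]]; first by rewrite eqxx.
move=> _; rewrite !inE => /eqP ex /eqP ey.
have pQ := part_Cl PP mL; rewrite -eQ in pQ.
have gen : forall p, exists B l, [/\ B \in P, B \in B0, l \in cls A m, l \in Ls &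
    pblock Q p = blk B l].
  move=> p; have : pblock Q p \in Q.
    by apply: pblock_mem; case/and3P: pQ => /eqP ->; rewrite inE.
  rewrite eQ => /imset2P [B l BP lK ->]; exists B, l; split => //.
    exact: subsetP (PD PP) _ BP.
  exact: cls_Ls lK.
have inb : forall p, p \in pblock Q p by move=> p; rewrite mem_pblock; case/and3P: pQ => /eqP ->; rewrite inE.
have [B [l [BP BB lK lL e1]]] := gen x; have [B' [l' [BP' BB' lK' lL' e2]]] := gen y.
have hx := inb x; have hy := inb y; rewrite e1 inE ex in hx; rewrite e2 inE ey in hy.
case/andP: hx => xB hx; case/andP: hy => yB hy.
have eB := part_uniq (hPD PP) BP BP' xB yB; subst B'.
rewrite e1 e2 /fcol !lineof_blk // => /(cidx_inj mL lK lK') el; subst l'.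
have ei := blk_two lL hx hy.
by apply: decI; rewrite [dec x]surjective_pairing [dec y]surjective_pairing ex ey ei.
Qed.

Lemma silver_Dst : silver _ Dst (one_big_adj n).
Proof.
have V0P : V0 \in Pcs by rewrite !inE eqxx.
apply: (gen_silver (k := k) (Pc := Pcs) (P0 := V0) (f := fcol)).
- exact: k1.
- exact: szDst.
- by move=> b1 b2 x y h1 h2 xy x1 y1 x2 y2; apply: (line_uniq hpD xy h1 h2).
- exact: part_Pcs.
- exact: par_Pcs.
- exact: V0P.
- exact: hf_Dst.
Qed.
End Prod.
Unset Implicit Arguments.

Theorem theorem3 (k v : nat) :
  (exists A : {set {set 'I_(k ^ 2)}}, affine_plane k A) ->
  (exists B : {set {set 'I_v}}, rbibd v k B) ->
  exists D : {set {set 'I_(k * v)}},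
    rbibd (k * v) k D /\ silver _ D (one_big_adj (k * v)).
Proof.
move=> [A hA] [B0 [hB [PcD [hPcD hPD]]]].
have k2 : 2 < k by case: hB.
have kv : k < v by case: hB.
have k0 : 0 < k by apply: ltn_trans k2.
have v0 : 0 < v by apply: ltn_trans kv.
have kk1 : 1 < k ^ 2.
  by rewrite -mulnn; apply: (@leq_trans k); [apply: ltnW | apply: leq_pmulr].
have kk0 : 0 < k ^ 2 by apply: ltnW.
set p0 : 'I_(k ^ 2) := Ordinal kk0.
set p1 : 'I_(k ^ 2) := Ordinal kk1.
have n01 : p0 != p1 by [].
have [l0 [l0A _ _]] : exists l0, [/\ l0 \in A, p0 \in l0 & p1 \in l0].
  have := d2_pair hA n01 => /eqP /cards1P [l0 e].
  have : l0 \in [set b in A | (p0 \in b) && (p1 \in b)] by rewrite e set11.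
  by rewrite inE => /andP [h1 /andP [h2 h3]]; exists l0.
set y0 : 'I_v := Ordinal v0.
set i0 : 'I_k := Ordinal k0.
exists (Dst A l0 p0 B0 i0); split.
- exact (@rbibd_Dst k v A l0 p0 B0 PcD y0 i0 hA l0A hB hPcD hPD).
- exact (@silver_Dst k v A l0 p0 B0 PcD y0 i0 hA l0A hB hPcD hPD).
Qed.
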